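(* Let $g:\mathbb{R}^n\to\mathbb{R}$ be a convex function and let $\mathcal{S}=\{x\in\mathbb{R}^n : g(x)\le 0\}$. Let $f_d:\mathbb{R}^n\to\mathbb{R}^n$ be continuously differentiable and consider the discrete system $x_{k+1}=f_d(x_k)$. Assume that there exists $x^0\in\mathbb{R}^n$ with $g(x^0)<0$, and that the function $x\mapsto g(f_d(x))$ is concave. Then $\mathcal{S}$ is an invariant set for this discrete system if and only if there exists $\alpha\ge 0$ such that $$\alpha g(x)-g(f_d(x))\ge 0\quad\text{for all } x\in\mathbb{R}^n.$$ Moreover, if $g$ and $x\mapsto g(f_d(x))$ are quadratic functions, then the same equivalence holds without the assumption that $x\mapsto g(f_d(x))$ is concave.
   Context: A set $\mathcal{S}\subseteq\mathbb{R}^n$ is an invariant set for the discrete system $x_{k+1}=f_d(x_k)$ if $x_k\in\mathcal{S}$ implies $x_{k+1}\in\mathcal{S}$ for all $k\in\mathbb{N}$. *)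

(* Defs.v *)
(* R^n is rendered as row vectors 'rV[R]_n. *)
From HB Require Import structures.
From mathcomp Require Import all_boot all_order all_algebra.
From mathcomp Require Import all_classical all_reals all_analysis.
Set Implicit Arguments. Unset Strict Implicit. Unset Printing Implicit Defensive.
Import Order.TTheory GRing.Theory Num.Theory.
Import numFieldNormedType.Exports.
Local Open Scope ring_scope.

Section Defs.
Variables (R : realType) (n : nat).
Notation V := 'rV[R]_n.

Definition convex_fun (h : V -> R) : Prop :=
  forall (x y : V) (t : R), 0 <= t -> t <= 1 ->
    h ((1 - t) *: x + t *: y) <= (1 - t) * h x + t * h y.

Definition concave_fun (h : V -> R) : Prop :=
  forall (x y : V) (t : R), 0 <= t -> t <= 1 ->
    (1 - t) * h x + t * h y <= h ((1 - t) *: x + t *: y).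

Definition quadratic_fun (h : V -> R) : Prop :=
  exists (A : 'M[R]_n) (b : V) (c : R),
    forall x : V, h x = (x *m A *m x^T) 0 0 + (b *m x^T) 0 0 + c.

(* continuously differentiable map R^n -> R^n: differentiable everywhere and
   the derivative x |-> Df(x) is continuous (tested pointwise on each vector,
   which is equivalent in finite dimension) *)
Definition C1_map (f : V -> V) : Prop :=
  (forall x : V, differentiable f x) /\
  (forall v : V, continuous (fun x : V => ('d f x : V -> V) v)).

Definition invariant_set (f : V -> V) (S : set V) : Prop :=
  forall xs : nat -> V, (forall k, xs k.+1 = f (xs k)) ->
    forall k, S (xs k) -> S (xs k.+1).

Definition sublevel0 (g : V -> R) : set V := [set x | g x <= 0].

End Defs.

(* Main.v *)
Require Import Defs.
From HB Require Import structures.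
From mathcomp Require Import all_boot all_order all_algebra.
From mathcomp Require Import all_classical all_reals all_analysis.
From mathcomp Require Import ring lra.
Import Order.TTheory GRing.Theory Num.Theory.
Import numFieldNormedType.Exports.
Local Open Scope ring_scope.
Lemma quad1D (R : realType) (a b c p q r : R) :
  0 <= a -> 0 < c -> a + b + c < 0 ->
  (forall t, a * t ^+ 2 + b * t + c <= 0 -> p * t ^+ 2 + q * t + r <= 0) ->
  (p + q + r) * c <= r * (a + b + c).
Proof.
move=> a0 c0 s0 H.
set e := c * p - r * a; set f := c * q - r * b.
suff : e + f <= 0 by rewrite /e /f; lra.
have Dt : forall t, a * t ^+ 2 + b * t + c = 0 -> 0 < t -> e * t + f <= 0.
  move=> t ht tp.
  have hp : p * t ^+ 2 + q * t + r <= 0 by apply: H; rewrite ht.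
  have : t * (e * t + f) <= 0.
    have -> : t * (e * t + f) = c * (p * t ^+ 2 + q * t + r) - r * (a * t ^+ 2 + b * t + c).
      by rewrite /e /f; ring.
    rewrite ht mulr0 subr0; nra.
  rewrite pmulr_rle0 //.
have [a00|ap] := eqVneq a 0.
  have bn : b < 0 by rewrite a00 in s0; lra.
  set t1 := c / (- b).
  have t1p : 0 < t1 by rewrite /t1 divr_gt0 //; lra.
  have t1l : t1 < 1.
    rewrite /t1 ltr_pdivrMr; lra.
  have bt1 : b * t1 = - c by rewrite /t1; field; rewrite lt_eqF.
  have h1 : e * t1 + f <= 0 by apply: Dt => //; rewrite a00 mul0r add0r bt1; lra.
  have pn : p <= 0.
    rewrite leNgt; apply/negP => pp.
    set T := 2 + (`|q| + `|r|) / p.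
    have T2 : 2 <= T by rewrite /T lerDl divr_ge0 // ?addr_ge0 // ltW.
    have Hp : (`|q| + `|r|) = p * (T - 2) by rewrite /T; field; rewrite gt_eqF.
    have : p * T ^+ 2 + q * T + r <= 0.
      apply: H; rewrite a00 mul0r add0r; nra.
    have := lexx `|q|; rewrite {1}ler_norml => /andP[hq1 hq2].
    have := lexx `|r|; rewrite {1}ler_norml => /andP[hr1 hr2].
    have : p * T * (T - 2) = T * (`|q| + `|r|) by rewrite Hp; ring.
    have ar0 : 0 <= `|r| by [].
    nra.
  have en : e <= 0 by rewrite /e a00 mulr0 subr0; nra.
  nra.
have apos : 0 < a by rewrite lt_def ap.
set De := b ^+ 2 - 4%:R * a * c.
have Dp : 0 < De.
  have h1 : (a + c) ^+ 2 < b ^+ 2.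
    rewrite -[b ^+ 2]sqrrN !expr2; apply: ltr_pM; lra.
  have h2 : 0 <= (a - c) ^+ 2 by apply: sqr_ge0.
  rewrite /De; rewrite !expr2 in h1 h2 *; nra.
set sq := Num.sqrt De.
have sq2 : sq ^+ 2 = De by rewrite sqr_sqrtr // ltW.
have sqp : 0 < sq by rewrite sqrtr_gt0.
set t1 := (- b - sq) / (2%:R * a); set t2 := (- b + sq) / (2%:R * a).
have a2 : 2%:R * a != 0 by rewrite mulf_neq0 // pnatr_eq0.
have fact : forall t, a * t ^+ 2 + b * t + c = a * (t - t1) * (t - t2).
  move=> t; rewrite /t1 /t2; apply: (mulfI a2); rewrite -[in RHS]mulrA.
  have : c = (b ^+ 2 - sq ^+ 2) / (4%:R * a) by rewrite sq2 /De; field; rewrite ?pnatr_eq0 // mulf_neq0 // pnatr_eq0.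
  move=> ->; field; exact: ap.
have t12 : t1 < t2.
  rewrite /t1 /t2 ltr_pM2r ?invr_gt0 ?mulr_gt0 //; lra.
have s1 := fact 1; have s0' := fact 0.
have t11 : t1 < 1 /\ 1 < t2.
  have h : (1 - t1) * (1 - t2) < 0.
    have : a * (1 - t1) * (1 - t2) < 0 by rewrite -s1; lra.
    rewrite -mulrA pmulr_rlt0 //.
  split; nra.
have t1p : 0 < t1.
  have : 0 < a * (0 - t1) * (0 - t2) by rewrite -s0'; lra.
  rewrite -mulrA pmulr_rgt0 //; nra.
have h1 : e * t1 + f <= 0 by apply: Dt => //; rewrite fact subrr mulr0 mul0r.
have h2 : e * t2 + f <= 0 by apply: Dt; [rewrite fact subrr mulr0 | lra].
have : (t2 - t1) * (e + f) = (t2 - 1) * (e * t1 + f) + (1 - t1) * (e * t2 + f) by ring.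
nra.
Qed.

Lemma line_eq (R : realType) (n : nat) (x y : 'rV[R]_n) (t : R) :
  (1 - t) *: x + t *: y = x + t *: (y - x).
Proof. by rewrite scalerBl scale1r scalerBr addrAC addrA. Qed.

Lemma quad_line (R : realType) (n : nat) (h : 'rV[R]_n -> R) :
  quadratic_fun h -> forall x d : 'rV[R]_n, exists p q r : R,
    forall t, h (x + t *: d) = p * t ^+ 2 + q * t + r.
Proof.
move=> [A [b [c hA]]] x d.
exists ((d *m A *m d^T) 0 0),
  ((x *m A *m d^T) 0 0 + (d *m A *m x^T) 0 0 + (b *m d^T) 0 0),
  ((x *m A *m x^T) 0 0 + (b *m x^T) 0 0 + c) => t.
rewrite hA linearD /= linearZ /= !mulmxDl !mulmxDr.
rewrite -!scalemxAl -!scalemxAr !mxE.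
ring.
Qed.

Lemma assemble (R : realType) (n : nat) (g h : 'rV[R]_n -> R) :
  (forall x, g x <= 0 -> h x <= 0) -> (exists x0, g x0 < 0) ->
  (forall x y, 0 < g x -> g y < 0 -> h y * g x <= h x * g y) ->
  exists alpha : R, 0 <= alpha /\ forall x, 0 <= alpha * g x - h x.
Proof.
move=> inv [x0 gx0] key.
pose E : set R := fun r => r = 0 \/ exists x, 0 < g x /\ r = h x / g x.
have ubE : forall y, g y < 0 -> ubound E (h y / g y).
  move=> y gy r [->|[x [gx ->]]].
    by rewrite -mulrNN -invrN divr_ge0 // oppr_ge0 ?inv // ltW.
  rewrite ler_pdivrMr // mulrC mulrA ler_ndivlMr //.
  by rewrite mulrC; apply: key.
have E0 : E 0 by left.
have hs : has_sup E by split; [exists 0 | exists (h x0 / g x0); exact: ubE].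
exists (sup E); split; first exact: sup_upper_bound.
move=> x; rewrite subr_ge0.
have [gp|gn|gz] := ltgtP (g x) 0.
- have : sup E <= h x / g x by apply: ge_sup; [exists 0 | exact: ubE].
  by rewrite ler_ndivlMr.
- have : E (h x / g x) by right; exists x.
  move/(sup_upper_bound hs); rewrite ler_pdivrMr //.
- by rewrite gz mulr0; apply: inv; rewrite gz.
Qed.

Lemma key_concave (R : realType) (n : nat) (g h : 'rV[R]_n -> R) :
  convex_fun g -> concave_fun h -> (forall x, g x <= 0 -> h x <= 0) ->
  forall x y, 0 < g x -> g y < 0 -> h y * g x <= h x * g y.
Proof.
move=> cg ch inv x y gx gy.
set D := g x - g y.
have Dp : 0 < D by rewrite /D; lra.
set s := g x / D.
have s0 : 0 <= s by rewrite /s divr_ge0 // ltW.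
have s1 : s <= 1 by rewrite /s ler_pdivrMr // mul1r /D; lra.
have e1 : (1 - s) * D = - g y by rewrite /s /D; field; rewrite gt_eqF.
have e2 : s * D = g x by rewrite /s /D; field; rewrite gt_eqF.
have hz : h ((1 - s) *: x + s *: y) <= 0.
  apply: inv; apply: (le_trans (cg x y s s0 s1)).
  have : ((1 - s) * g x + s * g y) * D = 0.
    have -> : ((1 - s) * g x + s * g y) * D = ((1 - s) * D) * g x + (s * D) * g y by ring.
    by rewrite e1 e2; ring.
  by move/eqP; rewrite mulf_eq0 (gt_eqF Dp) orbF => /eqP ->.
have := le_trans (ch x y s s0 s1) hz.
move=> hh.
have : ((1 - s) * h x + s * h y) * D <= 0 by rewrite pmulr_lle0.
have -> : ((1 - s) * h x + s * h y) * D = ((1 - s) * D) * h x + (s * D) * h y by ring.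
rewrite e1 e2; lra.
Qed.

Lemma key_quad (R : realType) (n : nat) (g h : 'rV[R]_n -> R) :
  convex_fun g -> quadratic_fun g -> quadratic_fun h ->
  (forall x, g x <= 0 -> h x <= 0) ->
  forall x y, 0 < g x -> g y < 0 -> h y * g x <= h x * g y.
Proof.
move=> cg qg qh inv x y gx gy.
have [a [b [c Hg]]] := @quad_line _ _ g qg x (y - x).
have [p [q [r Hh]]] := @quad_line _ _ h qh x (y - x).
have G0 : g x = c by have := Hg 0; rewrite scale0r addr0 => ->; rewrite expr0n /=; ring.
have G1 : g y = a + b + c by have := Hg 1; rewrite scale1r addrC subrK => ->; ring.
have H0 : h x = r by have := Hh 0; rewrite scale0r addr0 => ->; rewrite expr0n /=; ring.
have H1 : h y = p + q + r by have := Hh 1; rewrite scale1r addrC subrK => ->; ring.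
have a0 : 0 <= a.
  have := cg x y (2^-1) ltac:(by rewrite invr_ge0) ltac:(by rewrite invf_le1 // ler1n).
  rewrite line_eq Hg G0 G1.
  set u := (2^-1 : R).
  have u2 : u * 2 = 1 by rewrite /u; field.
  have up : 0 < u by rewrite /u invr_gt0.
  move=> hc.
  have hc' : a * (u * u) <= a * u.
    have e : 1 - u = u by rewrite -u2; ring.
    move: hc; rewrite e expr2.
    have : c = c * u * 2 by rewrite -mulrA u2 mulr1.
    nra.
  have : 0 <= a * u * u by nra.
  by rewrite -mulrA pmulr_lge0 // mulr_gt0.
rewrite G0 G1 H0 H1.
apply: quad1D => //; first by rewrite -G0.
  by rewrite -G1.
by move=> t ht; rewrite -Hh; apply: inv; rewrite Hg.
Qed.

Lemma inv_pt (R : realType) (n : nat) (g : 'rV[R]_n -> R) (fd : 'rV[R]_n -> 'rV[R]_n) :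
  invariant_set fd (sublevel0 g) -> forall x, g x <= 0 -> g (fd x) <= 0.
Proof.
move=> H x gx.
exact: (H (fun k => iter k fd x) (fun k => erefl) 0%N gx).
Qed.

Lemma inv_of_alpha (R : realType) (n : nat) (g : 'rV[R]_n -> R) (fd : 'rV[R]_n -> 'rV[R]_n) :
  (exists alpha : R, 0 <= alpha /\ forall x, 0 <= alpha * g x - g (fd x)) ->
  invariant_set fd (sublevel0 g).
Proof.
move=> [al [al0 H]] xs hxs k; rewrite /sublevel0 /= hxs => gk.
have := H (xs k); have : al * g (xs k) <= 0 by rewrite mulr_ge0_le0.
lra.
Qed.

Theorem theorem6 (R : realType) (n : nat)
    (g : 'rV[R]_n -> R) (fd : 'rV[R]_n -> 'rV[R]_n) :
  convex_fun g -> C1_map fd -> (exists x0 : 'rV[R]_n, g x0 < 0) ->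
  (concave_fun (fun x => g (fd x)) ->
     (invariant_set fd (sublevel0 g) <->
      exists alpha : R, 0 <= alpha /\
        forall x : 'rV[R]_n, 0 <= alpha * g x - g (fd x)))
  /\
  (quadratic_fun g -> quadratic_fun (fun x => g (fd x)) ->
     (invariant_set fd (sublevel0 g) <->
      exists alpha : R, 0 <= alpha /\
        forall x : 'rV[R]_n, 0 <= alpha * g x - g (fd x))).
Proof.
move=> cg _ sl; split.
- move=> ch; split; last exact: inv_of_alpha.
  move=> hinv; have ip := @inv_pt _ _ g fd hinv.
  apply: (@assemble _ _ g (fun x => g (fd x))) => //.
  exact: (@key_concave _ _ g (fun x => g (fd x))).
- move=> qg qh; split; last exact: inv_of_alpha.
  move=> hinv; have ip := @inv_pt _ _ g fd hinv.
  apply: (@assemble _ _ g (fun x => g (fd x))) => //.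
  exact: (@key_quad _ _ g (fun x => g (fd x))).
Qed.
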